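(* For every $\epsilon>0$, every $\delta>0$, and all integers $n\ge 2$ and $t$ with $1\le t\le \delta n$, there is an instance of $\mathrm{Knapsack}$ with $n$ objects (namely the uniform instance $c_i=v_i=1$ for all $i$, with a suitable capacity $C\in[1,2)$) such that $$\max\Big\{\sum_{i\in V} v_i\, y_{\{i\}} \;:\; y\in \mathrm{SA}^t(K)\Big\}\;\ge\; \frac{2-\epsilon}{1+\delta}\cdot \mathrm{OPT},$$ where $K$ is the LP relaxation of the instance and $\mathrm{OPT}$ its optimal integral value. That is, the integrality gap of the $t$-th level of the Sherali-Adams hierarchy for $\mathrm{Knapsack}$ is at least $(2-\epsilon)/(1+\delta)$ whenever $t\le\delta n$.
   Context: A $\mathrm{Knapsack}$ instance consists of objects $V=[n]$ with sizes $c_i\ge 0$, values $v_i\ge 0$ and a capacity $C$ with $c_i\le C$ for all $i$; $\mathrm{OPT}$ is the maximum of $\sum_{i\in X}v_i$ over $X\subseteq V$ with $\sum_{i\in X}c_i\le C$. Its LP relaxation is $K=\{x\in[0,1]^n: g(x)\ge 0\}$ with the single constraint $g(x)=C-\sum_{i\in V}c_ix_i$. Notation: $\mathcal P(U)$ is the power set of $U$ and $\mathcal P_t(U)$ the set of subsets of $U$ of size at most $t$. For a collection $\mathcal T$ of subsets of $V$ and a vector $y$ indexed by subsets of $V$, $M_{\mathcal T}(y)$ is the symmetric matrix with rows and columns indexed by $\mathcal T$ and $(I,J)$-entry $y_{I\cup J}$. For an affine function $g(x)=b+\sum_{j\in V}a_jx_j$, $g*y$ is the vector with $(g*y)_I=b\,y_I+\sum_{j\in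 V}a_j\,y_{I\cup\{j\}}$. The $t$-th Sherali-Adams lifted polytope of $K=\{x\in[0,1]^n: g_\ell(x)\ge0,\ \ell=1,\dots,m\}$ (with affine $g_\ell$) is $\mathrm{SA}^t(K)$, the set of $y\in[0,1]^{\mathcal P_t(V)}$ with $y_\emptyset=1$, $M_{\mathcal P(U)}(y)\succeq 0$ for every $U\subseteq V$ with $|U|\le t$, and $M_{\mathcal P(W)}(g_\ell*y)\succeq0$ for every $\ell$ and every $W\subseteq V$ with $|W|\le t-1$. *)

(* Defs.v *)
From HB Require Import structures.
From mathcomp Require Import all_boot all_order all_algebra.
Set Implicit Arguments. Unset Strict Implicit. Unset Printing Implicit Defensive.
Import Order.TTheory GRing.Theory Num.Theory.
Local Open Scope ring_scope.

Section KnapsackSA.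
Variables (R : realFieldType) (n : nat).

(* Optimal integral value of the Knapsack instance (sizes c, values v,
   capacity C): max of sum_{i in X} v_i over X with sum_{i in X} c_i <= C.
   (The empty set is feasible and values are nonnegative, so 0 is a
   harmless identity for the max.) *)
Definition knapOPT (c v : 'I_n -> R) (C : R) : R :=
  \big[Num.max/0]_(X : {set 'I_n} | \sum_(i in X) c i <= C) \sum_(i in X) v i.

Definition psd_on (T : {set {set 'I_n}}) (f : {set 'I_n} -> {set 'I_n} -> R)
  : Prop :=
  forall x : {set 'I_n} -> R,
    0 <= \sum_(I in T) \sum_(J in T) x I * f I J * x J.

(* g * y for g(x) = C - sum_j c_j x_j :
   (g*y)_I = C y_I - sum_j c_j y_{I u {j}}. *)
Definition knap_gstar (c : 'I_n -> R) (C : R) (y : {set 'I_n} -> R)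
  (I : {set 'I_n}) : R :=
  C * y I - \sum_(j : 'I_n) c j * y (I :|: [set j]).

(* y in SA^t(K) for K = {x in [0,1]^n : C - sum c_i x_i >= 0}.
   y is a function on all subsets; only its values on sets of size <= t
   matter (the conditions only involve such entries). *)
Definition SA_knap (t : nat) (c : 'I_n -> R) (C : R) (y : {set 'I_n} -> R)
  : Prop :=
  [/\ y set0 = 1,
      (forall S : {set 'I_n}, (#|S| <= t)%N -> 0 <= y S <= 1),
      (forall U : {set 'I_n}, (#|U| <= t)%N ->
          psd_on (powerset U) (fun I J => y (I :|: J)))
    & (forall W : {set 'I_n}, (#|W| <= t - 1)%N ->
          psd_on (powerset W) (fun I J => knap_gstar c C y (I :|: J)))].

End KnapsackSA.

(* Main.v *)
Require Import Defs.
From HB Require Import structures.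
From mathcomp Require Import all_boot all_order all_algebra.
Import Order.TTheory GRing.Theory Num.Theory.
Local Open Scope ring_scope.
Set Implicit Arguments. Unset Strict Implicit.

Lemma mulr_shuffle (R : comNzRingType) (x a u v y : R) :
  x * (a * u * v) * y = a * (x * u) * (y * v).
Proof. rewrite mulrCA -!mulrA; congr (_ * _); by rewrite mulrCA [v * y]mulrC. Qed.

Lemma sq_sum (R : comNzRingType) (T : finType) (P : {pred T}) (u : T -> R) :
  (\sum_(I in P) u I) ^+ 2 = \sum_(I in P) \sum_(J in P) u I * u J.
Proof. by rewrite expr2 mulr_suml; apply: eq_bigr => I _; rewrite mulr_sumr. Qed.

Lemma quad_split (R : realFieldType) (n : nat) (T : {set {set 'I_n}})
  (x : {set 'I_n} -> R) (a : R) (e0 : {set 'I_n} -> R) (b : 'I_n -> R)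
  (e : 'I_n -> {set 'I_n} -> R) :
  \sum_(I in T) \sum_(J in T) x I * (a * e0 I * e0 J + \sum_i b i * e i I * e i J) * x J
  = a * (\sum_(I in T) x I * e0 I) ^+ 2 + \sum_i b i * (\sum_(I in T) x I * e i I) ^+ 2.
Proof.
have E1 : a * (\sum_(I in T) x I * e0 I) ^+ 2 =
   \sum_(I in T) \sum_(J in T) a * (x I * e0 I) * (x J * e0 J).
  rewrite sq_sum mulr_sumr; apply: eq_bigr => I _; rewrite mulr_sumr.
  apply: eq_bigr => J _; exact: mulrA.
have E2 : \sum_i b i * (\sum_(I in T) x I * e i I) ^+ 2 =
   \sum_(I in T) \sum_(J in T) \sum_i b i * (x I * e i I) * (x J * e i J).
  transitivity (\sum_i \sum_(I in T) \sum_(J in T) b i * (x I * e i I) * (x J * e i J)).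
    apply: eq_bigr => i _; rewrite sq_sum mulr_sumr; apply: eq_bigr => I1 _; rewrite mulr_sumr.
    apply: eq_bigr => J1 _; exact: mulrA.
  rewrite exchange_big; apply: eq_bigr => I1 _; exact: exchange_big.
rewrite E1 E2 -big_split /=; apply: eq_bigr => I _.
rewrite -big_split /=; apply: eq_bigr => J _.
rewrite mulrDr mulrDl; congr (_ + _); first exact: mulr_shuffle.
rewrite mulr_sumr mulr_suml; apply: eq_bigr => i _; exact: mulr_shuffle.
Qed.

Lemma psd_gen (R : realFieldType) (n : nat) (T : {set {set 'I_n}})
  (f : {set 'I_n} -> {set 'I_n} -> R) (a : R) (e0 : {set 'I_n} -> R) (b : 'I_n -> R)
  (e : 'I_n -> {set 'I_n} -> R) :
  0 <= a -> (forall i, 0 <= b i) ->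
  (forall I J, I \in T -> J \in T -> f I J = a * e0 I * e0 J + \sum_i b i * e i I * e i J) ->
  psd_on T f.
Proof.
move=> a0 b0 fE x.
have -> : \sum_(I in T) \sum_(J in T) x I * f I J * x J =
  \sum_(I in T) \sum_(J in T) x I * (a * e0 I * e0 J + \sum_i b i * e i I * e i J) * x J.
  by apply: eq_bigr => I IT; apply: eq_bigr => J JT; rewrite fE.
rewrite quad_split; apply: addr_ge0; first by apply: mulr_ge0 => //; apply: sqr_ge0.
by apply: sumr_ge0 => i _; apply: mulr_ge0 => //; apply: sqr_ge0.
Qed.

Lemma natr_andb (R : realFieldType) (a b : bool) : ((a && b)%:R : R) = a%:R * b%:R.
Proof. by case: a; case: b; rewrite ?mul1r ?mul0r. Qed.

Definition ystar {R : realFieldType} {n : nat} (al be : R) (K : {set 'I_n}) : R :=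
  al * (K == set0)%:R + \sum_i be * (K \subset [set i])%:R.

Lemma sub1_notin (n : nat) (U K : {set 'I_n}) (i : 'I_n) :
  K \subset U -> i \notin U -> (K \subset [set i]) = (K == set0).
Proof.
move=> KU iU; apply/idP/idP; last by move/eqP->; rewrite sub0set.
move=> Ki; apply/eqP/setP => k; rewrite inE; apply/negbTE/negP => kK.
have := subsetP Ki k kK; rewrite inE => /eqP ki.
by move: iU; rewrite -ki (subsetP KU k kK).
Qed.

Lemma sum_ind (R : realFieldType) (n : nat) (A : {set 'I_n}) :
  \sum_i ((i \in A)%:R : R) = #|A|%:R.
Proof.
rewrite -sumr_const [RHS]big_mkcond /=; apply: eq_bigr => i _; by case: (i \in A).
Qed.

Lemma ystar_split (R : realFieldType) (n : nat) (al be : R) (U K : {set 'I_n}) :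
  K \subset U ->
  ystar al be K = (al + be * #|~:U|%:R) * (K == set0)%:R
     + \sum_i be * (i \in U)%:R * (K \subset [set i])%:R.
Proof.
move=> KU; rewrite /ystar.
have -> : \sum_i be * (K \subset [set i])%:R =
   \sum_i (be * (i \in U)%:R * (K \subset [set i])%:R + be * (K == set0)%:R * (i \in ~:U)%:R).
  apply: eq_bigr => i _; rewrite inE; case iU: (i \in U) => /=.
    by rewrite mulr1 mulr0 addr0.
  by rewrite mulr0 mul0r add0r mulr1 (sub1_notin KU) ?iU.
rewrite big_split /= mulrDl -addrA; congr (_ + _); rewrite addrC; congr (_ + _).
rewrite -mulr_sumr sum_ind mulrAC //.
Qed.

Lemma psd_ext (R : realFieldType) (n : nat) (T : {set {set 'I_n}}) (f g : {set 'I_n} -> {set 'I_n} -> R) :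
  (forall I J, f I J = g I J) -> psd_on T g -> psd_on T f.
Proof.
move=> fg H x; have := H x; congr (_ <= _).
by apply: eq_bigr => I _; apply: eq_bigr => J _; rewrite fg.
Qed.

Lemma cardC_R (R : realFieldType) (n : nat) (U : {set 'I_n}) :
  (#|~: U|%:R : R) = n%:R - #|U|%:R.
Proof. by apply/eqP; rewrite eq_sym subr_eq -natrD addnC cardsC card_ord. Qed.

Lemma psd_shape (R : realFieldType) (n : nat) (U : {set 'I_n}) (al be : R) :
  0 <= be -> 0 <= al + be * (n%:R - #|U|%:R) ->
  psd_on (powerset U) (fun I J => ystar al be (I :|: J)).
Proof.
move=> b0 a0.
apply: (@psd_gen _ _ _ _ (al + be * #|~:U|%:R) (fun I => (I == set0)%:R)
          (fun i => be * (i \in U)%:R) (fun i I => (I \subset [set i])%:R)).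
- by rewrite cardC_R.
- by move=> i; apply: mulr_ge0 => //; apply: ler0n.
move=> I J; rewrite !powersetE => IU JU.
have KU : I :|: J \subset U by rewrite subUset IU JU.
rewrite (ystar_split _ _ KU) setU_eq0 natr_andb.
rewrite mulrA; congr (_ + _); apply: eq_bigr => i _; by rewrite subUset natr_andb mulrA.
Qed.

Lemma gstar_ystar (R : realFieldType) (n : nat) (C al be : R) (K : {set 'I_n}) :
  knap_gstar (fun _ => 1) C (ystar al be) K = ystar (C * al) ((C - 1) * be) K.
Proof.
rewrite /knap_gstar.
have -> : \sum_(j : 'I_n) 1 * ystar al be (K :|: [set j]) = \sum_i be * (K \subset [set i])%:R.
  transitivity (\sum_(j : 'I_n) \sum_i be * (K \subset [set i])%:R * (j == i)%:R).
    apply: eq_bigr => j _; rewrite mul1r /ystar.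
    have -> : (K :|: [set j] == set0) = false.
      by apply/negbTE/set0Pn; exists j; rewrite !inE eqxx orbT.
    rewrite mulr0 add0r; apply: eq_bigr => i _.
    by rewrite subUset sub1set in_set1 natr_andb mulrA.
  rewrite exchange_big /=; apply: eq_bigr => i _.
  rewrite -mulr_sumr (bigD1 i) //= eqxx big1 ?addr0 ?mulr1 // => j /negbTE ->.
  by [].
rewrite /ystar mulrDr mulrA -addrA; congr (_ + _).
rewrite mulr_sumr -sumrB; apply: eq_bigr => i _.
by rewrite -mulrA mulrBl mul1r.
Qed.

Lemma sum_const_ord (R : realFieldType) (n : nat) (c : R) : \sum_(i < n) c = n%:R * c.
Proof. by rewrite sumr_const card_ord mulr_natl. Qed.

Lemma ystar_set0 (R : realFieldType) (n : nat) (al be : R) :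
  ystar al be (set0 : {set 'I_n}) = al + n%:R * be.
Proof.
rewrite /ystar eqxx mulr1; congr (_ + _).
under eq_bigr => i _ do rewrite sub0set mulr1.
exact: sum_const_ord.
Qed.

Lemma ystar_nz (R : realFieldType) (n : nat) (al be : R) (K : {set 'I_n}) (x : 'I_n) :
  x \in K -> ystar al be K = \sum_i be * (K \subset [set i])%:R.
Proof.
move=> xK; rewrite /ystar; have -> : (K == set0) = false.
  by apply/negbTE/set0Pn; exists x.
by rewrite mulr0 add0r.
Qed.

Lemma ystar_set1 (R : realFieldType) (n : nat) (al be : R) (x : 'I_n) :
  ystar al be [set x] = be.
Proof.
rewrite (@ystar_nz _ _ _ _ _ x) ?set11 //.
rewrite (bigD1 x) //= sub1set set11 mulr1 big1 ?addr0 // => i /negbTE ix.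
by rewrite sub1set in_set1 eq_sym ix mulr0.
Qed.

Lemma ystar_bnd (R : realFieldType) (n : nat) (al be : R) (K : {set 'I_n}) (x : 'I_n) :
  0 <= be -> x \in K -> 0 <= ystar al be K <= be.
Proof.
move=> b0 xK; rewrite (ystar_nz _ _ xK); apply/andP; split.
  by apply: sumr_ge0 => i _; apply: mulr_ge0 => //; apply: ler0n.
rewrite (bigD1 x) //= big1 ?addr0.
  by rewrite -[leRHS]mulr1; apply: ler_wpM2l => //; case: (_ \subset _).
move=> i ix; case Ki: (K \subset [set i]); last by rewrite mulr0.
by move: (subsetP Ki x xK); rewrite in_set1 => /eqP ixE; move: ix; rewrite ixE eqxx.
Qed.

Lemma core (R : realFieldType) (n t : nat) (C p : R) :
  0 <= p -> p <= 1 -> 1 <= C ->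
  (forall U : {set 'I_n}, (#|U| <= t)%N -> 0 <= (1 - n%:R * p) + p * (n%:R - #|U|%:R)) ->
  (forall W : {set 'I_n}, (#|W| <= t - 1)%N ->
      0 <= C * (1 - n%:R * p) + (C - 1) * p * (n%:R - #|W|%:R)) ->
  SA_knap t (fun _ : 'I_n => 1) C (ystar (1 - n%:R * p) p).
Proof.
move=> p0 p1 C1 HU HW; split.
- by rewrite ystar_set0 subrK.
- move=> S _; have [->|[x xS]] := set_0Vmem S.
    by rewrite ystar_set0 subrK lexx ler01.
  have /andP[h1 h2] := ystar_bnd (1 - n%:R * p) p0 xS.
  by rewrite h1 (le_trans h2 p1).
- by move=> U HUt; apply: psd_shape => //; exact: HU.
- move=> W HWt.
  apply: (@psd_ext _ _ _ _ (fun I J => ystar (C * (1 - n%:R * p)) ((C - 1) * p) (I :|: J))).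
    by move=> I J; rewrite gstar_ystar.
  apply: psd_shape; last exact: HW.
  by apply: mulr_ge0 => //; rewrite subr_ge0.
Qed.

Lemma opt_bnd (R : realFieldType) (n : nat) (C : R) :
  C < 2 -> 0 <= knapOPT (fun _ : 'I_n => 1) (fun _ : 'I_n => 1) C <= 1.
Proof.
move=> C2; rewrite /knapOPT; apply/andP; split.
  apply: (big_ind (fun x : R => 0 <= x)) => //.
    by move=> a b a0 b0; rewrite le_max a0.
  by move=> X _; apply: sumr_ge0.
apply: (big_ind (fun x : R => x <= 1)) => //.
  by move=> a b a1 b1; rewrite ge_max a1 b1.
move=> X; rewrite sumr_const => HX.
have h : (#|X| < 2)%N by rewrite -(ltr_nat R) (le_lt_trans HX C2).
by rewrite -[1 : R]/(1%:R) ler_nat -ltnS.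
Qed.

Lemma alg1 (R : realFieldType) (N p u : R) : 1 - N * p + p * (N - u) = 1 - p * u.
Proof. by rewrite mulrBr addrA [N * p]mulrC subrK. Qed.

Lemma alg2 (R : realFieldType) (C N p w : R) :
  C * (1 - N * p) + (C - 1) * p * (N - w) = C - (N * p + (C - 1) * p * w).
Proof.
rewrite mulrBr mulr1 [(C - 1) * p * (N - w)]mulrBr opprD !addrA; congr (_ - _).
rewrite -addrA; congr (_ + _).
by rewrite mulrBl mul1r mulrBl -[C * p * N]mulrA [p * N]mulrC addKr.
Qed.

Lemma core2 (R : realFieldType) (n t : nat) (C p : R) :
  0 <= p -> p <= 1 -> 1 <= C ->
  (forall u : nat, (u <= t)%N -> (u <= n)%N -> p * u%:R <= 1) ->
  (forall w : nat, (w <= t - 1)%N -> (w <= n)%N -> n%:R * p + (C - 1) * p * w%:R <= C) ->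
  SA_knap t (fun _ : 'I_n => 1) C (ystar (1 - n%:R * p) p).
Proof.
move=> p0 p1 C1 HU HW; apply: core => //.
  move=> U hU; rewrite alg1 subr_ge0; apply: HU => //.
  by have := max_card U; rewrite card_ord.
move=> W hW; rewrite alg2 subr_ge0; apply: HW => //.
by have := max_card W; rewrite card_ord.
Qed.

Lemma obj_val (R : realFieldType) (n : nat) (al p : R) :
  \sum_(i : 'I_n) 1 * ystar al p [set i] = n%:R * p.
Proof.
under eq_bigr => i _ do rewrite mul1r ystar_set1.
exact: sum_const_ord.
Qed.

Unset Implicit Arguments.
Theorem mainTheorem1 (R : realFieldType) (eps delta : R) (n t : nat) :
  0 < eps -> 0 < delta -> (2 <= n)%N -> (1 <= t)%N ->
  (t%:R <= delta * n%:R) ->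
  exists C : R, [/\ 1 <= C, C < 2 &
    exists y : {set 'I_n} -> R,
      SA_knap t (fun _ : 'I_n => 1) C y /\
      (2 - eps) / (1 + delta) * knapOPT (fun _ : 'I_n => 1) (fun _ : 'I_n => 1) C
        <= \sum_(i : 'I_n) 1 * y [set i]].
Proof.
move=> e0 d0 hn ht htd.
have n0 : (0 < n%:R :> R) by rewrite ltr0n (leq_trans _ hn).
have d1p : 0 < 1 + delta by rewrite addr_gt0.
case: (leqP n t) => hnt.
-
  pose p : R := n%:R^-1.
  have np1 : n%:R * p = 1 by rewrite /p mulfV // lt0r_neq0.
  have p0 : 0 <= p by rewrite /p invr_ge0 ltW.
  exists 1; split => //; first by rewrite ltr1n.
  exists (ystar (1 - n%:R * p) p); split.
    apply: core2 => //.
    - by rewrite /p invf_le1 // ler1n (leq_trans _ hn).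
    - move=> u _ un; rewrite mulrC; apply: (@le_trans _ _ (n%:R * p)); last by rewrite np1.
      by apply: ler_wpM2r => //; rewrite ler_nat.
    - by move=> w _ _; rewrite subrr mul0r mul0r addr0 np1.
  rewrite obj_val np1.
  have /andP[o0 o1] := opt_bnd n (ltr1n R 2).
  have d1 : 1 <= delta.
    rewrite -(ler_pM2r n0) mul1r (le_trans _ htd) // ler_nat //.
  have k1 : (2 - eps) / (1 + delta) <= 1.
    rewrite ler_pdivrMr // mul1r (le_trans (_ : _ <= 2)) //.
      by rewrite gerBl ltW.
    by rewrite [2]/(1 + 1) lerD2l.
  apply: (le_trans (ler_wpM2r o0 k1)); by rewrite mul1r.
-
  case: t ht hnt htd => [//|t'] _ hnt htd.
  pose eta := Num.min eps 1.
  have eta0 : 0 < eta by rewrite lt_min e0 ltr01.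
  have eta1 : eta <= 1 by rewrite ge_min lexx orbT.
  have etae : eta <= eps by rewrite ge_min lexx.
  pose C : R := 2 - eta.
  have C1 : 1 <= C by rewrite /C lerBrDr [2]/(1 + 1) lerD2l.
  have C2 : C < 2 by rewrite /C gtrBl.
  have C0 : 0 < C by apply: lt_le_trans C1.
  pose D : R := (n + t')%:R.
  have D0 : 0 < D by rewrite /D ltr0n addn_gt0 (leq_trans _ hn).
  have nD : n%:R <= D by rewrite /D ler_nat leq_addr.
  pose p : R := C / D.
  have p0 : 0 <= p by rewrite /p divr_ge0 // ltW.
  have pD : p * D = C by rewrite /p divfK // lt0r_neq0.
  exists C; split => //.
  exists (ystar (1 - n%:R * p) p); split.
    apply: core2 => //.
    - rewrite /p ler_pdivrMr // mul1r; apply: le_trans (ltW C2) _.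
      by apply: le_trans nD; move: hn; rewrite -(ler_nat R).
    - move=> u hu _; apply: (@le_trans _ _ (p * t'.+1%:R)).
        by apply: ler_wpM2l => //; rewrite ler_nat.
      rewrite /p mulrAC ler_pdivrMr // mul1r.
      apply: (@le_trans _ _ (2 * t'.+1%:R)).
        by apply: ler_wpM2r => //; apply: ltW.
      by rewrite /D -natrM ler_nat mul2n -addnn addSn addnC ltn_add2r.
    - move=> w hw _; rewrite subn1 /= in hw.
      apply: (@le_trans _ _ (n%:R * p + p * t'%:R)).
        rewrite lerD2l -mulrA; apply: le_trans (ler_piMl _ _) _.
        + by apply: mulr_ge0 => //; apply: ler0n.
        + by rewrite lerBlDr [2]/(1 + 1) in C2 *; apply: ltW.
        by apply: ler_wpM2l => //; rewrite ler_nat.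
      by rewrite [n%:R * p]mulrC -mulrDr -natrD pD.
  rewrite obj_val.
  have /andP[o0 o1] := opt_bnd n C2.
  have k0 : 0 <= C / (1 + delta) by rewrite divr_ge0 // ltW.
  have kk : (2 - eps) / (1 + delta) <= C / (1 + delta).
    rewrite ler_pM2r ?invr_gt0 // /C lerD2l lerN2 //.
  apply: (le_trans (ler_wpM2r o0 kk)); apply: (le_trans (ler_piMr k0 o1)).
  rewrite /p mulrCA; apply: ler_wpM2l; first exact: ltW.
  rewrite ler_pdivlMr // mulrC ler_pdivrMr //.
  rewrite /D natrD mulrDr mulr1 lerD2l mulrC.
  by apply: le_trans htd; rewrite ler_nat.
Qed.
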